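(* Let $\mathbf{n} > 3\mathbf{f}\ge 0$ be integers. For two transaction digests $d_1,d_2$, let $d_j.ois^C$ denote the set of ordering indicators assigned to $d_j$ by correct replicas, and suppose every element of $d_1.ois^C$ is strictly smaller than every element of $d_2.ois^C$. For $j=1,2$, let $S_j$ be a collection of ordering indicators for $d_j$, one from each replica of a set $Q_j$ of at least $\mathbf{n}-\mathbf{f}$ distinct replicas, at most $\mathbf{f}$ of which are Byzantine (arbitrary values), with every value from a correct replica of $Q_j$ lying in $d_j.ois^C$; and let $d_j.AOI$ be the $(\mathbf{f}+1)$-th smallest value of $S_j$. Then $d_1.AOI < d_2.AOI$. (Consequently, since the protocol orders transactions in increasing order of $AOI$, the transaction with digest $d_1$ is ordered before the one with digest $d_2$.)
   Context: Setting: $\mathbf{n}$ replicas, at most $\mathbf{f}$ Byzantine; each replica assigns a numerical ordering indicator to each transaction it receives, correct replicas honestly, Byzantine replicas arbitrarily. The assigned ordering indicator $AOI$ of a transaction is the $(\mathbf{f}+1)$-th smallest value in a committed collection of at least $\mathbf{n}-\mathbf{f}$ ordering indicators for it (at most one per replica). Ordering Linearizability: if all correct ordering indicators of $T_1$ are smaller than all correct ordering indicators of $T_2$, then $T_1$ is ordered before $T_2$. *)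

(* Defs.v *)
From HB Require Import structures.
From mathcomp Require Import all_boot all_order all_algebra.
Set Implicit Arguments. Unset Strict Implicit. Unset Printing Implicit Defensive.
Import Order.TTheory GRing.Theory Num.Theory.
Local Open Scope ring_scope.

(* Replicas are 'I_n.  [oc i = Some x] means correct replica i assigned
   ordering indicator x to the digest ([None]: it assigned none).
   [B] is the set of Byzantine replicas. *)

Definition ois_C (R : Type) (n : nat) (B : {set 'I_n}) (oc : 'I_n -> option R)
  (x : R) : Prop := exists2 i : 'I_n, i \notin B & oc i = Some x.

(* The (f+1)-th smallest value (0-based index f of the sorted list) of the
   collection S = { v i | i in Q } (one value per replica of Q, with multiplicity). *)
Definition AOI (R : realDomainType) (n f : nat) (Q : {set 'I_n}) (v : 'I_n -> R) : R :=
  nth 0 (sort <=%R [seq v i | i <- enum Q]) f.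

(* Main.v *)
Require Import Defs.
From HB Require Import structures.
From mathcomp Require Import all_boot all_order all_algebra.
From mathcomp Require Import zify.
Import Order.TTheory GRing.Theory Num.Theory.
Local Open Scope ring_scope.

Section Aux.
Variable R : realDomainType.

Lemma cnt_ge (t : seq R) k : sorted <=%R t -> (k < size t)%N ->
  (size t - k <= count (fun x => (nth 0 t k <= x)%R) t)%N.
Proof.
move=> st kt.
set a := nth 0 t k.
have ha : forall j, (k <= j < size t)%N -> a <= nth 0 t j.
  move=> j /andP[kj jt].
  exact: (sorted_leq_nth (@le_trans _ R) (@lexx _ R) 0 st).
rewrite -[in X in count _ X](cat_take_drop k t) count_cat.
rewrite (_ : count _ (drop k t) = size (drop k t)); last first.
  apply/eqP; rewrite -all_count; apply/(all_nthP 0) => i.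
  rewrite size_drop nth_drop => hi.
  by apply: ha; rewrite leq_addr /= -ltn_subRL.
by rewrite size_drop leq_addl.
Qed.

Lemma cnt_le (t : seq R) k : sorted <=%R t -> (k < size t)%N ->
  (k.+1 <= count (fun x => (x <= nth 0 t k)%R) t)%N.
Proof.
move=> st kt.
set a := nth 0 t k.
have ha : forall j, (j <= k)%N -> nth 0 t j <= a.
  move=> j jk.
  apply: (sorted_leq_nth (@le_trans _ R) (@lexx _ R) 0 st) => //.
  by rewrite inE (leq_ltn_trans jk kt).
rewrite -[in X in count _ X](cat_take_drop k.+1 t) count_cat.
rewrite (_ : count _ (take k.+1 t) = size (take k.+1 t)); last first.
  apply/eqP; rewrite -all_count; apply/(all_nthP 0) => i.
  rewrite (size_takel kt) => hi; rewrite nth_take //.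
  by apply: ha; rewrite -ltnS.
by rewrite (size_takel kt) leq_addr.
Qed.

Lemma pick_correct n (Q B : {set 'I_n}) (P : pred 'I_n) :
  (#|B| < count P (enum Q))%N -> exists2 i, i \in Q & P i && (i \notin B).
Proof.
move=> h.
case: (boolP [exists i, [&& i \in Q, P i & i \notin B]]).
  by case/existsP=> i /and3P[iQ Pi iB]; exists i => //; rewrite Pi iB.
move/existsPn => H; exfalso; move: h; apply/negP; rewrite -leqNgt.
apply: (@leq_trans (count (mem B) (enum Q))).
  rewrite (@eq_in_count _ P (predI P (mem B))); first by apply: sub_count => i /= /andP[].
  move=> i; rewrite mem_enum => iQ /=.
  by case Pi: (P i) => //=; move: (H i); rewrite iQ Pi /= negbK.
rewrite -size_filter cardE; apply: uniq_leq_size.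
  by rewrite filter_uniq ?enum_uniq.
by move=> x; rewrite mem_filter => /andP[xB _]; rewrite mem_enum.
Qed.
End Aux.

Theorem mainTheorem2 (R : realDomainType) (n f : nat) (B : {set 'I_n})
  (oc1 oc2 : 'I_n -> option R) (Q1 Q2 : {set 'I_n}) (v1 v2 : 'I_n -> R) :
  (3 * f < n)%N ->
  (#|B| <= f)%N ->
  (forall x y : R, ois_C B oc1 x -> ois_C B oc2 y -> x < y) ->
  (n - f <= #|Q1|)%N ->
  (n - f <= #|Q2|)%N ->
  (forall i, i \in Q1 -> i \notin B -> ois_C B oc1 (v1 i)) ->
  (forall i, i \in Q2 -> i \notin B -> ois_C B oc2 (v2 i)) ->
  AOI f Q1 v1 < AOI f Q2 v2.
Proof.
move=> hn hB hlt hQ1 hQ2 h1 h2.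
rewrite /AOI.
set t1 := sort _ _; set t2 := sort _ _.
have st1 : sorted <=%R t1 by apply: sort_sorted; exact: le_total.
have st2 : sorted <=%R t2 by apply: sort_sorted; exact: le_total.
have sz1 : size t1 = #|Q1| by rewrite size_sort size_map cardE.
have sz2 : size t2 = #|Q2| by rewrite size_sort size_map cardE.
have k1 : (f < size t1)%N by rewrite sz1; apply: leq_trans hQ1; lia.
have k2 : (f < size t2)%N by rewrite sz2; apply: leq_trans hQ2; lia.
have c1 := @cnt_ge R _ _ st1 k1.
have c2 := @cnt_le R _ _ st2 k2.
rewrite [count _ t1](permP (permEl (perm_sort _ _))) count_map in c1.
rewrite [count _ t2](permP (permEl (perm_sort _ _))) count_map in c2.
have [i iQ /andP[Pi iB]] := @pick_correct _ Q1 B (preim v1 (fun x => (nth 0 t1 f <= x)%R)) ltac:(apply: leq_trans c1; rewrite sz1; lia).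
have [j jQ /andP[Pj jB]] := @pick_correct _ Q2 B (preim v2 (fun x => (x <= nth 0 t2 f)%R)) ltac:(apply: leq_trans c2; lia).
apply: (le_lt_trans Pi); apply: (lt_le_trans _ Pj).
exact: hlt (h1 i iQ iB) (h2 j jQ jB).
Qed.
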